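(* Let $H=P_r$ be the path $1-2-\cdots-r$ and, for each $i\in\{1,\dots,r\}$, let $G_i$ be a $d_i$-regular graph of order $n_i$ with adjacency eigenvalues $d_i=\lambda_1(A(G_i)),\dots,\lambda_{n_i}(A(G_i))$. Let $G=\bigvee_{P_r}\{G_i:1\le i\le r\}$, $N_i=\sum_{j\in N_{P_r}(i)}n_j$, $\sigma(M_i(s))=\{s^2(d_i+N_i-1)-s\lambda_k(A(G_i))+1\}_{k=1}^{n_i}$ and $\lambda_1(M_i(s))=s^2(d_i+N_i-1)-sd_i+1$. Then $$\sigma(M_G(s))=\bigcup_{i=1}^r\big(\sigma(M_i(s))-\{\lambda_1(M_i(s))\}\big)\cup\sigma(F_r(s)),$$ where $F_r(s)$ is the $r\times r$ symmetric tridiagonal matrix with diagonal entries $\lambda_1(M_1(s)),\dots,\lambda_1(M_r(s))$ and sub/super-diagonal entries $(F_r(s))_{i,i+1}=(F_r(s))_{i+1,i}=-s\sqrt{n_in_{i+1}}$, $i=1,\dots,r-1$ (and removing $\{\lambda_1(M_i(s))\}$ means removing one copy, corresponding to $k=1$).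
   Context: For a simple undirected graph $G$ with adjacency matrix $A$, degree matrix $D$ and identity $I$, and real $s$, the deformed Laplacian matrix is $M_G(s)=I-sA+s^2(D-I)$; $\sigma(\cdot)$ is the multiset of eigenvalues. $H$-join: given a graph $H$ on vertex set $\{1,\dots,r\}$ and pairwise vertex-disjoint graphs $G_1,\dots,G_r$, $\bigvee_H\{G_i\}$ has vertex set $\bigcup_iV(G_i)$ and edges $\bigcup_iE(G_i)$ together with all edges $uv$, $u\in V(G_i)$, $v\in V(G_j)$, for each $ij\in E(H)$. *)

(* Defs.v *)
From HB Require Import structures.
From mathcomp Require Import all_boot all_order all_algebra.
Set Implicit Arguments. Unset Strict Implicit. Unset Printing Implicit Defensive.
Import Order.TTheory GRing.Theory Num.Theory.
Local Open Scope ring_scope.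

Definition simple_graph (T : finType) (e : rel T) : Prop :=
  (forall x, ~~ e x x) /\ (forall x y, e x y = e y x).

Definition degree (T : finType) (e : rel T) (x : T) : nat := #|[set y | e x y]|.

Definition regular (T : finType) (e : rel T) (d : nat) : Prop :=
  forall x, degree e x = d.

Definition adjmx (R : nzRingType) (T : finType) (e : rel T) : 'M[R]_#|T| :=
  \matrix_(x, y) (e (enum_val x) (enum_val y))%:R.

Definition degmx (R : nzRingType) (T : finType) (e : rel T) : 'M[R]_#|T| :=
  \matrix_(x, y) ((x == y)%:R * (degree e (enum_val x))%:R).

Definition deformed_laplacian (R : comNzRingType) (T : finType) (e : rel T) (s : R)
  : 'M[R]_#|T| :=
  1%:M - s *: adjmx R e + s ^+ 2 *: (degmx R e - 1%:M).

Definition is_spectrum (R : comNzRingType) n (A : 'M[R]_n) (l : seq R) : Prop :=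
  char_poly A = \prod_(x <- l) ('X - x%:P).

Definition path_adj (r : nat) : rel 'I_r :=
  fun i j => (i.+1 == j :> nat) || (j.+1 == i :> nat).

Definition path_join (r : nat) (n : 'I_r -> nat) (e : forall i, rel 'I_(n i))
  : rel {i : 'I_r & 'I_(n i)} :=
  fun u v =>
    if tag u == tag v then
      (e (tag u) (tagged u) (tagged_as u v))
    else path_adj (tag u) (tag v).

Definition Nsum (r : nat) (n : 'I_r -> nat) (i : 'I_r) : nat :=
  \sum_(j < r | path_adj i j) n j.

Definition Mi_eig (R : rcfType) (r : nat) (n : 'I_r -> nat) (d : 'I_r -> nat)
  (s : R) (i : 'I_r) (lam : R) : R :=
  s ^+ 2 * ((d i)%:R + (Nsum n i)%:R - 1) - s * lam + 1.

Definition Fmx (R : rcfType) (r : nat) (n : 'I_r -> nat) (d : 'I_r -> nat) (s : R)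
  : 'M[R]_r :=
  \matrix_(i, j)
    if i == j then Mi_eig n d s i (d i)%:R
    else if path_adj i j then - s * Num.sqrt ((n i * n j)%:R)
    else 0.

(* Main.v *)
Require Import Defs.
From HB Require Import structures.
From mathcomp Require Import all_boot all_order all_algebra.
From mathcomp Require Import perm ring.
Import Order.TTheory GRing.Theory Num.Theory.
Local Open Scope ring_scope.

Set Implicit Arguments. Unset Strict Implicit. Unset Printing Implicit Defensive.

Section Gen.
Variable R : comNzRingType.

Lemma det_mxsub_inj N (A : 'M[R]_N) (h : 'I_N -> 'I_N) :
  injective h -> \det (mxsub h h A) = \det A.
Proof.
move=> hinj; set s := perm hinj.
have -> : mxsub h h A = perm_mx s *m A *m perm_mx s^-1.
  by rewrite -row_permE -col_permE; apply/matrixP => i j; rewrite !mxE !permE.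
by rewrite !det_mulmx !det_perm odd_permV mulrC mulrA -signr_addb addbb mul1r.
Qed.

Lemma det_mxsub_inj' m N (A : 'M[R]_N) (h : 'I_m -> 'I_N) :
  injective h -> m = N -> \det (mxsub h h A) = \det A.
Proof. by move=> hinj e; subst m; apply: det_mxsub_inj. Qed.

Lemma det_mxsub_codom m1 m2 N (A : 'M[R]_N) (f : 'I_m1 -> 'I_N) (g : 'I_m2 -> 'I_N) :
  injective f -> injective g -> codom f =i codom g ->
  \det (mxsub f f A) = \det (mxsub g g A).
Proof.
move=> finj ginj fg.
have e : m2 = m1.
  by rewrite -[m1]card_ord -[m2]card_ord -(card_codom finj) -(card_codom ginj); apply: eq_card.
subst m2.
have gf k : g k \in codom f by rewrite fg codom_f.
pose s k := iinv (gf k).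
have gE : g =1 f \o s by move=> k; rewrite /= f_iinv.
have sinj : injective s by move=> a b /(congr1 f); rewrite !f_iinv; apply: ginj.
have -> : mxsub g g A = mxsub (f \o s) (f \o s) A by apply/matrixP => i j; rewrite !mxE !gE.
by rewrite mxsub_comp det_mxsub_inj.
Qed.


Lemma split_lshift m n (i : 'I_m) : split (lshift n i) = inl i.
Proof. exact: (unsplitK (inl i)). Qed.
Lemma split_rshift m n (i : 'I_n) : split (rshift m i) = inr i.
Proof. exact: (unsplitK (inr i)). Qed.

Lemma det_subtri N (A : 'M[R]_N) (P : pred 'I_N) m1 m2
  (g1 : 'I_m1 -> 'I_N) (g2 : 'I_m2 -> 'I_N) :
  injective g1 -> injective g2 ->
  (forall x, (x \in codom g1) = P x) -> (forall x, (x \in codom g2) = ~~ P x) ->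
  (forall x y, ~~ P x -> P y -> A x y = 0) ->
  \det A = \det (mxsub g1 g1 A) * \det (mxsub g2 g2 A).
Proof.
move=> i1 i2 c1 c2 A0.
pose h (k : 'I_(m1 + m2)) := match split k with inl a => g1 a | inr b => g2 b end.
have P1 a : P (g1 a) by rewrite -c1 codom_f.
have P2 b : ~~ P (g2 b) by rewrite -c2 codom_f.
have hinj : injective h.
  move=> a b; rewrite /h -[a]splitK -[b]splitK.
  case: (split a) => [a'|a']; case: (split b) => [b'|b'] /=;
    rewrite ?split_lshift ?split_rshift.
  - by move/i1 ->.
  - by move=> e; move: (P1 a'); rewrite e (negbTE (P2 b')).
  - by move=> e; move: (P1 b'); rewrite -e (negbTE (P2 a')).
  - by move/i2 ->.
have card : (m1 + m2)%N = N.
  rewrite -[LHS]card_ord -(card_codom hinj) -[RHS]card_ord; apply: eq_card => x.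
  rewrite [in RHS]inE; idtac; case: (boolP (P x)) => Px.
    have : x \in codom g1 by rewrite c1.
    by case/codomP => y ->; apply/codomP; exists (lshift m2 y); rewrite /h split_lshift.
  have : x \in codom g2 by rewrite c2.
  by case/codomP => y ->; apply/codomP; exists (rshift m1 y); rewrite /h split_rshift.
rewrite -(det_mxsub_inj' A hinj card) -[mxsub h h A]submxK.
have -> : dlsubmx (mxsub h h A) = 0.
  by apply/matrixP => i j; rewrite !mxE /h split_lshift split_rshift A0.
rewrite det_ublock; congr (_ * _); congr (\det _); apply/matrixP => i j;
  by rewrite !mxE /h ?split_lshift ?split_rshift.
Qed.

Lemma codom_enum_val (T : finType) (B : {pred T}) x :
  (x \in codom (@enum_val T B)) = (x \in B).
Proof.
apply/codomP/idP => [[y ->]|xB]; first exact: enum_valP.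
by exists (enum_rank_in xB x); rewrite enum_rankK_in.
Qed.

Lemma det_blocktri (I : eqType) (s : seq I) (N : nat) (A : 'M[R]_N) (p : 'I_N -> I)
  (m : I -> nat) (g : forall c, 'I_(m c) -> 'I_N) :
  uniq s -> (forall x, p x \in s) ->
  (forall c, c \in s -> injective (g c)) ->
  (forall c, c \in s -> forall x, (x \in codom (g c)) = (p x == c)) ->
  (forall x y, (index (p y) s < index (p x) s)%N -> A x y = 0) ->
  \det A = \prod_(c <- s) \det (mxsub (g c) (g c) A).
Proof.
elim: s N A p m g => [|c s IH] N A p m g.
  move=> _ ps _ _ _; case: N A p g ps => [|N'] A p g ps; first by rewrite det_mx00 big_nil.
  by move: (ps ord0).
move=> /= /andP [cs us] ps ginj gcod A0.
pose B := [pred x | p x != c].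
pose g2 := @enum_val _ (mem B).
have g2inj : injective g2 by apply: enum_val_inj.
rewrite (@det_subtri _ A [pred x | p x == c] _ _ (g c) g2); first last.
- move=> x y /= pxc /eqP pyc; apply: A0; rewrite pyc /= eqxx.
  by rewrite eq_sym (negbTE pxc).
- by move=> x; rewrite codom_enum_val.
- by move=> x; rewrite gcod ?mem_head.
- exact: g2inj.
- by apply: ginj; rewrite mem_head.
rewrite big_cons; congr (_ * _).
pose p' := p \o g2.
pose m' c' := #|[pred y | p' y == c']|.
pose g' c' := @enum_val _ (mem [pred y | p' y == c']).
have g2B y : p (g2 y) != c by have := enum_valP y.
rewrite (@IH _ _ p' m' g') //.
- apply: eq_big_seq => c' c's.
  rewrite -mxsub_comp; apply: det_mxsub_codom.
  + by move=> a b /g2inj /enum_val_inj.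
  + by apply: ginj; rewrite inE c's orbT.
  + move=> x; rewrite gcod ?inE ?c's ?orbT //.
    apply/codomP/idP => [[y ->]|/eqP pxc].
      by have := enum_valP y; rewrite /= inE.
    have xB : x \in B by rewrite inE pxc; apply/eqP => ecc; rewrite -ecc c's in cs.
    have ex : g2 (enum_rank_in xB x) = x by rewrite /g2 enum_rankK_in.
    have yin : enum_rank_in xB x \in [pred y | p' y == c'] by rewrite inE /p' /= ex pxc.
    by exists (enum_rank_in yin (enum_rank_in xB x)); rewrite /= /g' (enum_rankK_in yin yin) ex.
- move=> y; have := ps (g2 y); rewrite inE (negbTE (g2B y)) //.
- by move=> c' _; apply: enum_val_inj.
- by move=> c' _ x; rewrite codom_enum_val.
- move=> x y lt; rewrite mxE; apply: A0; rewrite /=.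
  by rewrite ![c == _]eq_sym (negbTE (g2B x)) (negbTE (g2B y)) ltnS.
Qed.

Lemma char_poly_mx_sub m N (A : 'M[R]_N) (h : 'I_m -> 'I_N) : injective h ->
  mxsub h h (char_poly_mx A) = char_poly_mx (mxsub h h A).
Proof. by move=> hi; apply/matrixP => i j; rewrite !mxE (inj_eq hi). Qed.

Lemma char_poly_mxE N (A : 'M[R]_N) i j :
  char_poly_mx A i j = 'X *+ (i == j) - (A i j)%:P.
Proof. by rewrite !mxE. Qed.

Lemma sum_enum (T : finType) (G : 'I_#|T| -> R) :
  \sum_y G y = \sum_(v : T) G (enum_rank v).
Proof. by rewrite (reindex (@enum_rank T)) //; apply: onW_bij; apply: enum_rank_bij. Qed.

Lemma sum_delta (T : finType) (u : T) (G : T -> R) :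
  \sum_v (v == u)%:R * G v = G u.
Proof.
rewrite (bigD1 u) //= eqxx mul1r big1 ?addr0 // => v /negbTE ->; by rewrite mul0r.
Qed.

End Gen.

Section GLKs.
Variable R : comNzRingType.
Section GLK.
Variables (T : finType) (r : nat) (blk : T -> 'I_r) (f : 'I_r -> T).
Hypothesis Hf : forall j, blk (f j) = j.
Local Notation N := #|T|.
Local Notation ev := (@enum_val T (pred_of_simpl predT)).
Local Notation er := (@enum_rank T).
Definition isf u := u == f (blk u).
Definition qq u v : R := if isf v then (blk u == blk v)%:R else (u == v)%:R.
Definition Qm : 'M[R]_N := \matrix_(x, y) qq (ev x) (ev y).

Lemma isf_f j : isf (f j). Proof. by rewrite /isf Hf. Qed.

Lemma qqE u v : qq u v = (v == u)%:R + (~~ isf u && (v == f (blk u)))%:R.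
Proof.
rewrite /qq; case: (eqVneq v u) => [->|vu].
  by rewrite !eqxx /isf; case: eqP => _ /=; rewrite addr0.
rewrite add0r; case: (boolP (isf v)) => fv.
  congr (_ %:R); congr nat_of_bool; apply/eqP/andP => [bb|[_ /eqP ->]]; last by rewrite Hf.
  split; last by rewrite (eqP fv) bb.
  apply/negP => /eqP fu; move: vu; by rewrite (eqP fv) fu bb eqxx.
case: eqP; rewrite ?andbF // => e; move: fv; by rewrite e isf_f.
Qed.

Lemma rowQ x (F : 'I_N -> R) :
  \sum_y Qm x y * F y = F x + (~~ isf (ev x))%:R * F (er (f (blk (ev x)))).
Proof.
rewrite sum_enum.
under eq_bigr do rewrite mxE enum_rankK qqE mulrDl.
rewrite big_split /= sum_delta enum_valK; congr (_ + _).
case: (boolP (isf (ev x))) => /= _; last by rewrite mul1r sum_delta.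
by rewrite mul0r big1 // => v _; rewrite mul0r.
Qed.

Lemma colQ w (F : 'I_N -> R) :
  \sum_y F y * Qm y w =
  if isf (ev w) then \sum_(v | blk v == blk (ev w)) F (er v) else F w.
Proof.
rewrite sum_enum.
under eq_bigr do rewrite mxE enum_rankK /qq.
case: (isf (ev w)).
  by rewrite [RHS]big_mkcond; apply: eq_bigr => v _; case: eqP; rewrite ?mulr1 ?mulr0.
transitivity (F (er (ev w))); last by rewrite enum_valK.
rewrite -(sum_delta (ev w) (fun v => F (er v))).
by apply: eq_bigr => v _; rewrite mulrC eq_sym.
Qed.

Lemma detQ : \det Qm = 1.
Proof.
pose P := [pred x : 'I_N | ~~ isf (ev x)].
have e1 : mxsub (@enum_val _ (mem P)) (@enum_val _ (mem P)) Qm = 1%:M.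
  apply/matrixP => i j; rewrite !mxE /qq.
  have := enum_valP j; rewrite inE => /negbTE ->.
  by rewrite (inj_eq enum_val_inj) (inj_eq enum_val_inj).
have e2 : mxsub (@enum_val _ (mem (predC P))) (@enum_val _ (mem (predC P))) Qm = 1%:M.
  apply/matrixP => i j; rewrite !mxE /qq.
  have := enum_valP j; rewrite !inE negbK => fj; rewrite fj.
  have := enum_valP i; rewrite !inE negbK => fi.
  case: (eqVneq i j) => [->|ij]; first by rewrite !eqxx.
  case: eqP => // bb; move: ij.
  by rewrite -(inj_eq enum_val_inj) -(inj_eq enum_val_inj) (eqP fi) (eqP fj) bb eqxx.
rewrite (@det_subtri _ _ Qm P _ _ (@enum_val _ (mem P)) (@enum_val _ (mem (predC P)))).
- by rewrite e1 e2 !det1 mulr1.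
- exact: enum_val_inj.
- exact: enum_val_inj.
- by move=> x; rewrite codom_enum_val.
- by move=> x; rewrite codom_enum_val.
- move=> x y /negPn fx fy; rewrite mxE /qq (negbTE fy) (inj_eq enum_val_inj).
  case: (eqVneq x y) => // e; subst y; by move: fy; rewrite inE fx.
Qed.

Variable K : 'M[R]_N.
Definition KQ := K *m Qm.
Definition Kp : 'M[R]_N := \matrix_(x, y)
  if isf (ev x) then KQ x y else KQ x y - KQ (er (f (blk (ev x)))) y.

Lemma KpE x y : Kp x y =
  if isf (ev x) then KQ x y else KQ x y - KQ (er (f (blk (ev x)))) y.
Proof. by rewrite mxE. Qed.

Lemma QKp : Qm *m Kp = K *m Qm.
Proof.
apply/matrixP => x y; rewrite [LHS]mxE (rowQ x (fun z => Kp z y)) !mxE enum_rankK isf_f.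
case: (isf (ev x)) => /=; first by rewrite mul0r addr0.
by rewrite mul1r subrK.
Qed.

Lemma char_Kp : char_poly K = char_poly Kp.
Proof.
pose Q' := map_mx (@polyC R) Qm.
have e : char_poly_mx K *m Q' = Q' *m char_poly_mx Kp.
  rewrite /char_poly_mx mulmxBl mulmxBr mul_scalar_mx mul_mx_scalar -!map_mxM QKp.
  by [].
have dQ : \det Q' = 1 by rewrite det_map_mx detQ.
move: (congr1 determinant e); rewrite !det_mulmx dQ mulr1 mul1r.
by [].
Qed.

Section WithRho.
Variables (rho : 'I_r -> 'I_r -> R).
Hypothesis H1 : forall u j, \sum_(v | blk v == j) K (er u) (er v) = rho (blk u) j.
Hypothesis H2 : forall u u' w, blk u = blk u' -> blk w != blk u ->
  K (er u) (er w) = K (er u') (er w).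

Lemma KQE x y : KQ x y = if isf (ev y) then rho (blk (ev x)) (blk (ev y)) else K x y.
Proof.
rewrite /KQ mxE (colQ y (fun z => K x z)); case: (isf (ev y)) => //.
by rewrite -H1 enum_valK.
Qed.

Lemma f_inj : injective f.
Proof. by move=> a b e; rewrite -(Hf a) -(Hf b) e. Qed.

Theorem GLK (m : 'I_r -> nat) (psi : forall i, 'I_(m i) -> 'I_N) :
  (forall i, injective (psi i)) ->
  (forall i x, (x \in codom (psi i)) = ~~ isf (ev x) && (blk (ev x) == i)) ->
  char_poly K = char_poly (\matrix_(i, j) rho i j) *
    \prod_(i < r) char_poly (\matrix_(k, l) (K (psi i k) (psi i l) - K (er (f i)) (psi i l))).
Proof.
move=> psiinj psicod.
rewrite char_Kp /char_poly.
pose p x := if isf (ev x) then None else Some (blk (ev x)).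
pose mm c := match c with None => r | Some i => m i end.
pose gg c : 'I_(mm c) -> 'I_N :=
  match c as c0 return 'I_(mm c0) -> 'I_N with
  | None => fun j => er (f j) | Some i => psi i end.
have phiinj : injective (fun j => er (f j)).
  by move=> a b /enum_rank_inj /f_inj.
rewrite (@det_blocktri _ _ (None :: map Some (index_enum 'I_r)) _ _ p mm gg).
- rewrite big_cons big_map; congr (_ * _).
    rewrite /= char_poly_mx_sub //; congr (\det (char_poly_mx _)).
    apply/matrixP => i j; rewrite [LHS]mxE KpE [RHS]mxE !enum_rankK isf_f KQE !enum_rankK isf_f !Hf //.
  apply: eq_bigr => i _ /=; rewrite char_poly_mx_sub //.
  congr (\det (char_poly_mx _)); apply/matrixP => k l; rewrite [LHS]mxE KpE [RHS]mxE.
  have := psicod i (psi i k); rewrite codom_f => /esym /andP [nk /eqP bk].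
  have := psicod i (psi i l); rewrite codom_f => /esym /andP [nl /eqP bl].
  by rewrite (negbTE nk) !KQE (negbTE nl) bk.
- rewrite /= map_inj_uniq ?index_enum_uniq ?andbT; last by move=> a b [].
  by apply/mapP => -[].
- move=> x; rewrite /p; case: (isf (ev x)); first by rewrite mem_head.
  by rewrite inE map_f ?mem_index_enum ?orbT.
- by case => [i|] _ /=.
- case => [i|] _ x /=; first by rewrite psicod /p; case: (isf (ev x)).
  rewrite /p; apply/codomP/idP => [[j ->]|].
    by rewrite enum_rankK isf_f.
  by case: ifP => // fx _; exists (blk (ev x)); rewrite -(eqP fx) enum_valK.
- move=> x y lt.
  have pxy : p x != p y by apply: contraTneq lt => ->; rewrite ltnn.
  have xy : x != y by apply: contraNneq pxy => ->.
  rewrite char_poly_mxE (negbTE xy) mulr0n sub0r; apply/eqP; rewrite oppr_eq0 polyC_eq0; apply/eqP.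
  move: lt pxy; rewrite /p; case: (boolP (isf (ev x))) => fx //=.
  rewrite KpE (negbTE fx) !KQE !enum_rankK Hf.
  case: (isf (ev y)) => [_ _|_ bxy]; first by rewrite subrr.
  rewrite -[x]enum_valK -[y]enum_valK !enum_rankK.
  apply/eqP; rewrite subr_eq0; apply/eqP; apply: H2 => //.
  by move: bxy; apply: contra => /eqP ->.
Qed.

End WithRho.
End GLK.
End GLKs.

Lemma prod_seq_scale (R : comNzRingType) (I : Type) (l : seq I) (c : R) (F : I -> R) :
  \prod_(x <- l) (c * F x) = c ^+ size l * \prod_(x <- l) F x.
Proof.
elim: l => [|x l IH]; first by rewrite !big_nil expr0 mulr1.
by rewrite !big_cons IH /= exprS -!mulrA (mulrCA (F x)).
Qed.

Lemma char_poly_affine (R : fieldType) m (C : 'M[R]_m) (l : seq R) (a b : R) :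
  char_poly C = \prod_(x <- l) ('X - x%:P) ->
  char_poly (a%:M + b *: C) = \prod_(x <- l) ('X - (a + b * x)%:P).
Proof.
move=> hC.
have sz : size l = m.
  have := size_char_poly C; rewrite hC size_prod_XsubC; by case.
case: (eqVneq b 0) => [->|bn0].
  rewrite scale0r addr0 char_poly_trig ?scalar_mx_is_trig //.
  rewrite (eq_bigr (fun _ => 'X - a%:P)); last by move=> i _; rewrite mxE eqxx mulr1n.
  rewrite [RHS](eq_bigr (fun _ => 'X - a%:P)); last by move=> i _; rewrite mul0r addr0.
  by rewrite big_const_ord big_const_seq count_predT sz.
pose q := b^-1 *: ('X - a%:P).
have bq : b%:P * q = 'X - a%:P by rewrite mul_polyC scalerA mulfV ?scale1r.
have e1 : map_mx (comp_poly q) (char_poly_mx C) = q%:M - map_mx polyC C.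
  apply/matrixP => i j; rewrite !mxE comp_polyB comp_polyC; case: (i == j); rewrite ?mulr1n ?mulr0n ?comp_polyX ?comp_poly0 //.
have e2 : b%:P *: (q%:M - map_mx polyC C) = char_poly_mx (a%:M + b *: C).
  apply/matrixP => i j; rewrite !mxE; case: (i == j) => /=; rewrite ?mulr1n ?mulr0n.
    by rewrite mulrBr bq polyCD polyCM opprD addrA.
  by rewrite mulrBr mulr0 !sub0r add0r polyCM.
have := congr1 (fun p => b%:P ^+ m * p) (congr1 (comp_poly q) hC).
rewrite /= -det_map_mx e1 -detZ e2 -/(char_poly _) => ->.
rewrite rmorph_prod -sz -prod_seq_scale; apply: eq_bigr => x _.
by rewrite /= comp_polyB comp_polyX comp_polyC mulrBr bq polyCD polyCM opprD addrA.
Qed.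

Lemma deg_sum (R : nzRingType) (T : finType) (e : rel T) x :
  ((degree e x)%:R : R) = \sum_y (e x y)%:R.
Proof.
rewrite /degree -sum1dep_card natr_sum big_mkcond /=; apply: eq_bigr => y _.
by case: (e x y).
Qed.

Lemma sc_subproof m (k : 'I_m.-1) : (k.+1 < m)%N.
Proof. by case: m k => [|m] [k /= hk]. Qed.
Definition sc m (k : 'I_m.-1) : 'I_m := Ordinal (sc_subproof k).
Definition zo m (H : (0 < m)%N) : 'I_m := Ordinal H.

Lemma sc_inj m : injective (@sc m).
Proof. by move=> a b /(congr1 val) /= [] /val_inj. Qed.

Lemma sc_neq0 m (H : (0 < m)%N) k : sc k != zo H.
Proof. by []. Qed.

Lemma sc_onto m (H : (0 < m)%N) (a : 'I_m) : a != zo H -> exists k, a = sc k.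
Proof.
case: a => [[|a] ha] // _.
have hk : (a < m.-1)%N by case: m H ha.
by exists (Ordinal hk); apply: val_inj.
Qed.

Section Single.
Variable R : comNzRingType.

Lemma char_adj_split m (H : (0 < m)%N) (e : rel 'I_m) (dd : nat) :
  regular e dd ->
  char_poly (adjmx R e) = ('X - (dd%:R)%:P) *
    char_poly (\matrix_(k, l) ((e (sc k) (sc l))%:R - (e (zo H) (sc l))%:R) : 'M[R]_m.-1).
Proof.
move=> reg.
rewrite (@GLK R _ 1 (fun _ => ord0) (fun _ => zo H) _ (adjmx R e) (fun _ _ => dd%:R)
   _ _ (fun _ => m.-1) (fun _ k => enum_rank (sc k))).
- rewrite big_ord1; congr (_ * _); first by rewrite /char_poly det_mx11 char_poly_mxE !mxE.
  congr char_poly; apply/matrixP => k l; rewrite !mxE !enum_rankK //.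
- by move=> j; rewrite [j]ord1.
- move=> u j; rewrite [j]ord1 eqxx -(reg u) deg_sum; apply: eq_bigr => v _.
  by rewrite mxE !enum_rankK.
- by [].
- by move=> _ a b /enum_rank_inj /sc_inj.
- move=> i x; rewrite [i]ord1 eqxx andbT /isf.
  apply/codomP/idP => [[k ->]|nx]; first by rewrite enum_rankK sc_neq0.
  have [k hk] := sc_onto nx; exists k; by rewrite -hk enum_valK.
Qed.

End Single.

Unset Implicit Arguments.

Lemma char_poly_conj (R : comNzRingType) N (A P Pi : 'M[R]_N) :
  P *m Pi = 1%:M -> char_poly (P *m A *m Pi) = char_poly A.
Proof.
move=> PPi.
pose P' := map_mx (@polyC R) P; pose Pi' := map_mx (@polyC R) Pi.
have PPi' : P' *m Pi' = 1%:M by rewrite -map_mxM PPi map_scalar_mx.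
have e : char_poly_mx (P *m A *m Pi) = P' *m char_poly_mx A *m Pi'.
  rewrite /char_poly_mx mulmxBr mulmxBl !map_mxM.
  by rewrite mul_mx_scalar -scalemxAl PPi' scalemx1.
rewrite /char_poly e !det_mulmx mulrC mulrA -det_mulmx.
by rewrite [Pi' *m P']mulmx1C ?det1 ?mul1r.
Qed.

Section Join.
Variables (R : rcfType) (r : nat) (n d : 'I_r -> nat).
Variables (e : forall i : 'I_r, rel 'I_(n i)) (s : R).
Hypothesis npos : forall i : 'I_r, (0 < n i)%N.
Hypothesis reg : forall i : 'I_r, regular (e i) (d i).

Local Notation T := {i : 'I_r & 'I_(n i)}.
Local Notation Tg := (Tagged (fun i => 'I_(n i))).

Lemma sum_sig (F : T -> R) :
  \sum_(v : T) F v = \sum_(j < r) \sum_(k : 'I_(n j)) F (Tg k).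
Proof.
rewrite (sig_big_dep xpredT (fun _ => xpredT) (fun i (k : 'I_(n i)) => F (Tg k))) /=.
by apply: eq_bigr => -[].
Qed.

Lemma sum_tag (F : T -> R) j :
  \sum_(v : T | tag v == j) F v = \sum_(k : 'I_(n j)) F (Tg k).
Proof.
rewrite big_mkcond sum_sig (bigD1 j) //=.
under eq_bigr do rewrite eqxx.
rewrite [X in _ + X]big1 ?addr0 //.
by move=> i /negbTE ij; apply: big1 => k _; rewrite ij.
Qed.

Lemma pj_same i (a b : 'I_(n i)) : path_join e (Tg a) (Tg b) = e i a b.
Proof. by rewrite /path_join /= eqxx tagged_asE. Qed.

Lemma pj_diff i j (a : 'I_(n i)) (b : 'I_(n j)) : i != j ->
  path_join e (Tg a) (Tg b) = path_adj i j.
Proof. by rewrite /path_join /= => /negbTE ->. Qed.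

Lemma row_sum_pj i (a : 'I_(n i)) j :
  \sum_(k : 'I_(n j)) ((path_join e (Tg a) (Tg k))%:R : R) =
  if i == j then (d i)%:R else (path_adj i j)%:R * (n j)%:R.
Proof.
case: eqVneq => [<-|ij].
  by under eq_bigr do rewrite pj_same; rewrite -deg_sum reg.
under eq_bigr do rewrite pj_diff //.
by rewrite sumr_const card_ord mulr_natr.
Qed.

Lemma adj_irr (i : 'I_r) : path_adj i i = false.
Proof. rewrite /path_adj orbb; apply/negbTE; rewrite eqn_leq ltnn. done. Qed.

Lemma deg_join u : ((degree (path_join e) u)%:R : R) = (d (tag u) + Nsum n (tag u))%:R.
Proof.
case: u => i a /=; rewrite deg_sum sum_sig.
under eq_bigr do rewrite row_sum_pj.
rewrite natrD (bigD1 i) //= eqxx; congr (_ + _).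
rewrite /Nsum natr_sum [RHS]big_mkcond [RHS](bigD1 i) //= adj_irr add0r.
apply: eq_bigr => j ji; rewrite eq_sym (negbTE ji).
by case: (path_adj i j); rewrite ?mul1r ?mul0r.
Qed.

Definition al i : R := 1 + s ^+ 2 * ((d i + Nsum n i)%:R - 1).

Lemma LE u v : deformed_laplacian (path_join e) s (enum_rank u) (enum_rank v) =
  (u == v)%:R * al (tag u) - s * (path_join e u v)%:R.
Proof.
rewrite /deformed_laplacian !mxE !enum_rankK (inj_eq enum_rank_inj) deg_join /al.
by case: (u == v); rewrite /= ?mulr1n ?mulr0n; ring.
Qed.

Definition rho (i j : 'I_r) : R :=
  if i == j then Mi_eig n d s i (d i)%:R else - s * ((path_adj i j)%:R * (n j)%:R).

Local Notation M := (deformed_laplacian (path_join e) s).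

Lemma H1 u j : \sum_(v : T | tag v == j) M (enum_rank u) (enum_rank v) = rho (tag u) j.
Proof.
case: u => i a /=; rewrite sum_tag.
under eq_bigr do rewrite LE.
rewrite sumrB -mulr_sumr row_sum_pj /rho /=.
case: eqVneq => [ij|ij].
  subst j; under eq_bigr do rewrite eq_Tagged /= eq_sym.
  rewrite (sum_delta a (fun _ => al i)) /al /Mi_eig natrD; ring.
rewrite big1 ?sub0r ?mulNr // => k _.
have -> : (Tg a == Tg k) = false by apply/eqP => /(congr1 tag) /= /eqP; rewrite (negbTE ij).
by rewrite mul0r.
Qed.

Lemma H2 (u u' w : T) : tag u = tag u' -> tag w != tag u ->
  M (enum_rank u) (enum_rank w) = M (enum_rank u') (enum_rank w).
Proof.
move=> uu' wu; rewrite !LE.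
have -> : (u == w) = false by apply/eqP => e1; rewrite e1 eqxx in wu.
have -> : (u' == w) = false by apply/eqP => e1; rewrite -e1 uu' eqxx in wu.
have wu2 : tag w != tag u' by rewrite -uu'.
by rewrite /path_join [tag u == _]eq_sym (negbTE wu) [tag u' == _]eq_sym (negbTE wu2) uu'.
Qed.

Definition fj (j : 'I_r) : T := Tg (zo (npos j)).
Definition psi (i : 'I_r) (k : 'I_(n i).-1) := enum_rank (Tg (sc k)).

Definition CA (i : 'I_r) : 'M[R]_((n i).-1) :=
  \matrix_(k, l) ((e i (sc k) (sc l))%:R - (e i (zo (npos i)) (sc l))%:R).

Lemma join_GLK : char_poly M = char_poly (\matrix_(i, j) rho i j) *
  \prod_(i < r) char_poly ((al i)%:M + (- s) *: CA i).
Proof.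
rewrite (@GLK R _ r tag fj (fun j => erefl) M rho H1 H2 (fun i => (n i).-1) psi).
- congr (_ * _); apply: eq_bigr => i _; congr char_poly.
  apply/matrixP => k l; rewrite [LHS]mxE /psi /fj !LE !pj_same /= !eq_Tagged /= !mxE.
  rewrite (inj_eq (@sc_inj _)).
  by case: (k == l); rewrite /= ?mulr1n ?mulr0n; ring.
- by move=> i a b /enum_rank_inj /eqP; rewrite eq_Tagged /= => /eqP /sc_inj.
- move=> i x; apply/codomP/idP => [[k ->]|].
    by rewrite /psi enum_rankK /isf /fj /= eq_Tagged /= eqxx.
  rewrite -[x]enum_valK; case: (enum_val x) => j a.
  rewrite enum_rankK /isf /fj /= eq_Tagged /= => /andP [na /eqP ji]; subst j.
  by have [k hk] := sc_onto na; exists k; rewrite hk.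
Qed.

Lemma Fpart : char_poly (\matrix_(i, j) rho i j) = char_poly (Fmx n d s).
Proof.
pose sq (i : 'I_r) : R := Num.sqrt (n i)%:R.
have sqn0 i : sq i != 0.
  by rewrite /sq sqrtr_eq0 -ltNge ltr0n npos.
pose D := diag_mx (\row_i sq i).
pose Di := diag_mx (\row_i (sq i)^-1).
have DDi : D *m Di = 1%:M.
  rewrite /D /Di mulmx_diag; apply/matrixP => i j; rewrite !mxE divff //.
rewrite -(@char_poly_conj _ _ _ D Di DDi); congr char_poly.
rewrite /D /Di mul_diag_mx mul_mx_diag; apply/matrixP => i j; rewrite !mxE /rho.
case: eqVneq => [<-|ij].
  by rewrite mulrAC divff // mul1r.
case: (path_adj i j); last by rewrite /= ?mul0r ?mulr0 ?mul0r.
have key : (n j)%:R / sq j = sq j.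
  by rewrite -[X in X / _]sqr_sqrtr ?ler0n // expr2 -/(sq j) -mulrA divff ?mulr1.
transitivity (- s * sq i * ((n j)%:R / sq j)); first by rewrite /= mul1r; ring.
rewrite key natrM sqrtrM ?ler0n //; by rewrite /sq mulrA.
Qed.

Lemma block_part (i : 'I_r) (l : seq R) :
  is_spectrum (adjmx R (e i)) l -> head 0 l = (d i)%:R ->
  char_poly ((al i)%:M + (- s) *: CA i) =
  \prod_(x <- behead l) ('X - (Mi_eig n d s i x)%:P).
Proof.
rewrite /is_spectrum (@char_adj_split R _ (npos i) (e i) (d i) (reg i)) -/(CA i).
case: l => [|x0 l] /=.
  move=> h _; have := congr1 (fun p : {poly R} => size p) h.
  rewrite /= big_nil size_poly1 size_mul ?polyXsubC_eq0 ?size_XsubC ?size_char_poly //.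
  exact: monic_neq0 (char_poly_monic _).
move=> h hx0; subst x0; rewrite big_cons in h.
have hC := mulfI (negbT (polyXsubC_eq0 _)) h.
rewrite (@char_poly_affine _ _ _ _ (al i) (- s) hC); apply: eq_bigr => x _.
by rewrite /al /Mi_eig natrD; congr ('X - _%:P); ring.
Qed.

End Join.

Theorem corollary6p5 (R : rcfType) (r : nat) (n d : 'I_r -> nat)
  (e : forall i : 'I_r, rel 'I_(n i)) (lam : 'I_r -> seq R) (s : R) :
  (forall i, 0 < n i)%N ->
  (forall i, simple_graph (e i)) ->
  (forall i, regular (e i) (d i)) ->
  (forall i, is_spectrum (adjmx R (e i)) (lam i)) ->
  (forall i, head 0 (lam i) = (d i)%:R) ->
  char_poly (deformed_laplacian (path_join e) s) =
    (\prod_(i < r) \prod_(x <- behead (lam i)) ('X - (Mi_eig n d s i x)%:P))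
    * char_poly (Fmx n d s).
Proof.
move=> npos _ reg spec hd.
rewrite (@join_GLK R r n d e s npos reg) (@Fpart R r n d s npos) mulrC.
congr (_ * _); apply: eq_bigr => i _.
exact: (@block_part R r n d e s npos reg i (lam i) (spec i) (hd i)).
Qed.
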